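(* Let $\langle B,\wedge,{}'\rangle$ be an algebra with $\wedge$ binary and ${}'$ unary satisfying $x\wedge y\approx y\wedge x$, $x\wedge(y\wedge z)\approx(x\wedge y)\wedge z$, $x''\approx x$, and $x'\approx (x\wedge y)'\wedge(x\wedge y')'$. Then for all $x,z\in B$, writing $0=z\wedge z'$, we have $0'\wedge(x\wedge x)'=x'$.
   Context: In such an algebra the element $z\wedge z'$ does not depend on $z$; the paper denotes it $0$. *)

From Stdlib Require Import Setoid.

Theorem lemma2p6 (B : Type) (meet : B -> B -> B) (c : B -> B)
  (Hcomm : forall x y, meet x y = meet y x)
  (Hassoc : forall x y z, meet x (meet y z) = meet (meet x y) z)
  (Hinv : forall x, c (c x) = x)
  (Hax : forall x y, c x = meet (c (meet x y)) (c (meet x (c y)))) :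
  forall x z : B, meet (c (meet z (c z))) (c (meet x x)) = c x.
Proof.
  assert (Hsw : forall u v w, meet u (meet v w) = meet v (meet u w)).
  { intros u v w. rewrite Hassoc, (Hcomm u v), <- Hassoc. reflexivity. }
  assert (Z : forall x y, meet x (c x) = meet y (c y)).
  { intros x y.
    pose proof (Hax (c x) y) as E1. rewrite Hinv in E1.
    pose proof (Hax x y) as E2.
    pose proof (Hax (c y) x) as F1. rewrite Hinv in F1.
    pose proof (Hax y x) as F2.
    set (a := c (meet (c x) y)). set (b := c (meet (c x) (c y))).
    set (p := c (meet x y)). set (q := c (meet x (c y))).
    assert (L : meet x (c x) = meet (meet a b) (meet p q)).
    { exact (f_equal2 meet E1 E2). }
    assert (R : meet y (c y) = meet (meet q b) (meet p a)).
    { rewrite (f_equal2 meet F1 F2). unfold a, b, p, q.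
      rewrite (Hcomm (c y) x), (Hcomm (c y) (c x)), (Hcomm y x), (Hcomm y (c x)).
      reflexivity. }
    rewrite L, R.
    rewrite <- !Hassoc. rewrite (Hsw b p q), (Hsw a p (meet b q)), (Hsw a b q).
    rewrite (Hsw b p a), (Hsw q p (meet b a)), (Hsw q b a), (Hcomm q a). reflexivity. }
  intros x z. rewrite (Z z x).
  transitivity (meet (c (meet x (c x))) (c (meet x (c (c x))))).
  { rewrite Hinv. reflexivity. }
  symmetry. apply Hax.
Qed.
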